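(* Let $T$ be a $C_{p^rq^s}$-transfer system with exactly two connected components. If the connected component of $(0,0)$ equals $H_k$ for some $0<k<s$, or equals $V_\ell$ for some $0<\ell<r$, then $T$ is not lesser simply paired.
   Context: $p,q$ are distinct primes and $r,s\ge 0$ integers. The subgroups of $C_{p^rq^s}$ are identified with grid points $(i,j)$, $0\le i\le r$, $0\le j\le s$, where $(i,j)$ stands for $C_{p^iq^j}$ (intersection is coordinatewise minimum). A $C_{p^rq^s}$-transfer system is a partial order $\to$ on these vertices such that: $(i_1,j_1)\to(i_2,j_2)$ implies $i_1\le i_2$, $j_1\le j_2$; it is reflexive and transitive; and $(i_1,j_1)\to(i_2,j_2)$ implies $(\min\{i_1,a\},\min\{j_1,b\})\to(\min\{i_2,a\},\min\{j_2,b\})$ for every vertex $(a,b)$. Connected components are those of the underlying undirected graph. $V_\ell=\{(i,j): 0\le i\le \ell,\ 0\le j\le s\}$, $H_k=\{(i,j): 0\le i\le r,\ 0\le j\le k\}$. A transfer system is saturated if whenever $L\le K\le H$ and $L\to H$ is in it then $K\to H$ is in it; $\mathrm{Hull}(T)$ is the smallest saturated transfer system containing $T$; $T_c$ is the complete transfer system. A pair $(T,T')$ is compatible if $T\subseteq T'$ and for all subgroups $A,B,C$ with $B,C\le A$: if $B\to A$ is in $T$ and $B\cap C\to B$ is in $T'$ then $C\to A$ is in $T'$. $T$ is lesser simply paired if for every transfer system $T'\supseteq T$, $(T,T')$ is compatible iff $T'\in\{\mathrm{Hull}(T),T_c\}$. *)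

(* Defs.v *)
From mathcomp Require Import all_boot.
From Stdlib Require Import Relations.
Set Implicit Arguments. Unset Strict Implicit. Unset Printing Implicit Defensive.

(* Subgroups of C_{p^r q^s} are grid points (i,j) : nat * nat with i <= r, j <= s;
   (i,j) stands for C_{p^i q^j}. *)
Definition vert (r s : nat) (x : nat * nat) : Prop := (x.1 <= r) /\ (x.2 <= s).

Definition sub2 (x y : nat * nat) : Prop := (x.1 <= y.1) /\ (x.2 <= y.2).

Definition meet2 (x y : nat * nat) : nat * nat := (minn x.1 y.1, minn x.2 y.2).

Definition gridrel := nat * nat -> nat * nat -> Prop.

Record transfer_system (r s : nat) (T : gridrel) : Prop := {
  ts_support : forall x y, T x y -> vert r s x /\ vert r s y;
  ts_sub : forall x y, T x y -> sub2 x y;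
  ts_refl : forall x, vert r s x -> T x x;
  ts_trans : forall x y z, T x y -> T y z -> T x z;
  ts_restr : forall x y z, T x y -> vert r s z -> T (meet2 x z) (meet2 y z)
}.

Definition subrel (T T' : gridrel) : Prop := forall x y, T x y -> T' x y.
Definition releq (T T' : gridrel) : Prop := forall x y, T x y <-> T' x y.

Definition saturated (r s : nat) (T : gridrel) : Prop :=
  forall L K H, vert r s L -> vert r s K -> vert r s H ->
    sub2 L K -> sub2 K H -> T L H -> T K H.

Definition Hull (r s : nat) (T : gridrel) : gridrel := fun x y =>
  forall S : gridrel, transfer_system r s S -> saturated r s S -> subrel T S -> S x y.

Definition Tc (r s : nat) : gridrel := fun x y => vert r s x /\ vert r s y /\ sub2 x y.

Definition compatible (r s : nat) (T T' : gridrel) : Prop :=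
  subrel T T' /\
  forall A B C, vert r s A -> vert r s B -> vert r s C ->
    sub2 B A -> sub2 C A -> T B A -> T' (meet2 B C) B -> T' C A.

Definition lesser_simply_paired (r s : nat) (T : gridrel) : Prop :=
  forall T' : gridrel, transfer_system r s T' -> subrel T T' ->
    (compatible r s T T' <-> (releq T' (Hull r s T) \/ releq T' (Tc r s))).

Definition connected (T : gridrel) : gridrel :=
  clos_refl_trans (nat * nat) (fun x y => T x y \/ T y x).

Definition two_components (r s : nat) (T : gridrel) : Prop :=
  exists u v, vert r s u /\ vert r s v /\ ~ connected T u v /\
    forall w, vert r s w -> connected T u w \/ connected T v w.

Definition comp00_is (r s : nat) (T : gridrel) (P : nat * nat -> Prop) : Prop :=
  forall w, vert r s w -> (connected T (0, 0) w <-> P w).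

Definition Hset (k : nat) : nat * nat -> Prop := fun w => w.2 <= k.
Definition Vset (l : nat) : nat * nat -> Prop := fun w => w.1 <= l.

(* Main.v *)
Require Import Defs.
From Stdlib Require Import Relations Lia.
From mathcomp Require Import all_boot.
From mathcomp Require Import zify.

Section Gen.
Variables (r s k : nat) (f : nat * nat -> nat) (T : gridrel).
Hypothesis Hmeet : forall x y, f (meet2 x y) = minn (f x) (f y).
Hypothesis Hmono : forall x y, sub2 x y -> f x <= f y.
Hypothesis HT : transfer_system r s T.
Hypothesis Hc : comp00_is r s T (fun w => f w <= k).

Definition R0 (z : bool) : gridrel := fun x y =>
  vert r s x /\ vert r s y /\ sub2 x y /\ ((z /\ f x = 0) \/ k < f x \/ f y <= k).

Lemma vert_meet x z : vert r s x -> vert r s (meet2 x z).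
Proof. rewrite /vert /meet2 /=; lia. Qed.

Lemma sub2_meet x y z : sub2 x y -> sub2 (meet2 x z) (meet2 y z).
Proof. rewrite /sub2 /meet2 /=; lia. Qed.

Lemma R0_ts z : transfer_system r s (R0 z).
Proof.
split.
- by move=> x y [? [? _]].
- by move=> x y [_ [_ [? _]]].
- move=> x Hx; refine (conj Hx (conj Hx (conj _ _))); first by rewrite /sub2; lia.
  right; lia.
- move=> x y w [Hx [Hy [Sxy Dxy]]] [_ [Hw [Syw Dyw]]].
  have m1 := Hmono _ _ Sxy; have m2 := Hmono _ _ Syw.
  refine (conj Hx (conj Hw (conj _ _))); first by move: Sxy Syw; rewrite /sub2; lia.
  case: Dxy => [[Hz H0]|[H|H]]; first by left.
  + right; left; lia.
  + case: Dyw => [[Hz H0]|[H'|H']]; [left; split=>//; lia| lia | right; right; lia].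
- move=> x y w [Hx [Hy [Sxy Dxy]]] Hw.
  have m1 := Hmono _ _ Sxy.
  refine (conj (vert_meet _ w Hx) (conj (vert_meet _ w Hy) (conj (sub2_meet _ _ w Sxy) _))).
  rewrite !Hmeet.
  case: Dxy => [[Hz H0]|[H|H]]; first by left; split=>//; lia.
  + case: (leqP (f w) k) => H'; right; [right|left]; lia.
  + right; right; lia.
Qed.

Lemma T_block x y : T x y -> (f x <= k <-> f y <= k).
Proof.
move=> Hxy. have [Hx Hy] := ts_support HT Hxy.
rewrite -(Hc _ Hx) -(Hc _ Hy); split => H.
- apply: rt_trans; first exact: H. apply: rt_step; left; exact: Hxy.
- apply: rt_trans; first exact: H. apply: rt_step; right; exact: Hxy.
Qed.

Lemma T_sub z : Defs.subrel T (R0 z).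
Proof.
move=> x y Hxy. have [Hx Hy] := ts_support HT Hxy.
have Sxy := ts_sub HT Hxy. have B := T_block _ _ Hxy.
refine (conj Hx (conj Hy (conj Sxy _))). right; case: (leqP (f x) k) => H; [right; tauto | left; lia].
Qed.

Lemma R0_sat : saturated r s (R0 false).
Proof.
move=> L K H HL HK HH SLK SKH [_ [_ [_ D]]].
have m := Hmono _ _ SLK. refine (conj HK (conj HH (conj SKH _))).
case: D => [[//]|[D|D]]; right; [left|right]; lia.
Qed.

Lemma R0_compat : compatible r s T (R0 true).
Proof.
split; first exact: T_sub.
move=> A B C HA HB HC SBA SCA TBA [_ [_ [_ D]]].
have Bl := T_block _ _ TBA. refine (conj HC (conj HA (conj SCA _))).
rewrite Hmeet in D.
case: (leqP (f A) k) => HAk; first by right; right.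
have HBk : k < f B by case: (leqP (f B) k) => // /Bl; lia.
case: D => [[_ D]|[D|D]]; [left; split=>//; lia | right; left; lia | lia].
Qed.

Lemma gen_main x0 y0 :
  vert r s x0 -> vert r s y0 -> sub2 x0 y0 -> f x0 = 1 -> 1 <= k -> k < f y0 ->
  vert r s (0,0) -> sub2 (0,0) y0 -> f (0,0) = 0 ->
  ~ lesser_simply_paired r s T.
Proof.
move=> Hx0 Hy0 S0 f0 k1 fy0 H00 S00 f00 LSP.
have [Hi _] := LSP (R0 true) (R0_ts true) (T_sub true).
case: (Hi R0_compat) => E.
- have : Hull r s T (0,0) y0.
    apply/E. refine (conj H00 (conj Hy0 (conj S00 _))). by left.
  move=> /(_ (R0 false) (R0_ts false) R0_sat (T_sub false)) [_ [_ [_ D]]].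
  case: D => [[//]|]; lia.
- have : R0 true x0 y0 by apply/E.
  move=> [_ [_ [_ D]]]; case: D => [[_]|]; lia.
Qed.
End Gen.

Theorem mainTheorem14 (p q r s : nat) (T : gridrel) :
  prime p -> prime q -> p != q ->
  transfer_system r s T ->
  two_components r s T ->
  ((exists k, 0 < k < s /\ comp00_is r s T (Hset k)) \/
   (exists l, 0 < l < r /\ comp00_is r s T (Vset l))) ->
  ~ lesser_simply_paired r s T.
Proof.
move=> _ _ _ HT _ [[k [/andP [Hk1 Hk2] Hc]]|[l [/andP [Hl1 Hl2] Hc]]].
- apply: (@gen_main r s k snd T _ _ HT Hc (0,1) (0,s));
    rewrite /vert /sub2 /meet2 /=; try lia.
  all: try by move=> x y [].
- apply: (@gen_main r s l fst T _ _ HT Hc (1,0) (r,0));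
    rewrite /vert /sub2 /meet2 /=; try lia.
  all: try by move=> x y [].
Qed.
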